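(* Let $\varepsilon\neq0$. For every solution $\mathbf x:\mathbb R\to\mathbb R^3$ of the $\varepsilon$-revised system $$\dot{\mathbf x}=\mathbf x\times\mathbf m(\mathbf x)+\varepsilon[(\mathbf x\times\mathbf m(\mathbf x))\times\mathbf m(\mathbf x)],$$ the distance to the equilibrium set tends to zero in both time directions: $$d(\mathbf x(t),\mathbf E)\to0\ \text{ as } t\to+\infty\qquad\text{and}\qquad d(\mathbf x(t),\mathbf E)\to0\ \text{ as } t\to-\infty .$$
   Context: Fix constants $0<a_1<a_2<a_3$ and $a,b,c\in\mathbb R$. Set $\mathbf m(\mathbf x)=(a_1x^1+a,\ a_2x^2+b,\ a_3x^3+c)$; $\times$ is the cross product. $\mathbf E=\{\mathbf x\in\mathbb R^3:\mathbf x\times\mathbf m(\mathbf x)=\mathbf 0\}$ is the equilibrium set, and $d(\cdot,\mathbf E)$ is the Euclidean distance to $\mathbf E$. *)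

(* Defs.v *)
From Stdlib Require Import Reals.
From Coquelicot Require Import Coquelicot.
Open Scope R_scope.

Definition vec3 : Type := (R * R * R)%type.
Definition c1 (v : vec3) : R := fst (fst v).
Definition c2 (v : vec3) : R := snd (fst v).
Definition c3 (v : vec3) : R := snd v.

Definition vadd (u v : vec3) : vec3 := (c1 u + c1 v, c2 u + c2 v, c3 u + c3 v).
Definition vscale (k : R) (v : vec3) : vec3 := (k * c1 v, k * c2 v, k * c3 v).

Definition cross (u v : vec3) : vec3 :=
  (c2 u * c3 v - c3 u * c2 v,
   c3 u * c1 v - c1 u * c3 v,
   c1 u * c2 v - c2 u * c1 v).

Definition mvec (a1 a2 a3 a b c : R) (x : vec3) : vec3 :=
  (a1 * c1 x + a, a2 * c2 x + b, a3 * c3 x + c).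

Definition revised_field (a1 a2 a3 a b c eps : R) (x : vec3) : vec3 :=
  vadd (cross x (mvec a1 a2 a3 a b c x))
       (vscale eps (cross (cross x (mvec a1 a2 a3 a b c x)) (mvec a1 a2 a3 a b c x))).

Definition Eset (a1 a2 a3 a b c : R) (x : vec3) : Prop :=
  cross x (mvec a1 a2 a3 a b c x) = (0, 0, 0).

Definition euclid_dist (p q : vec3) : R :=
  sqrt ((c1 p - c1 q) ^ 2 + (c2 p - c2 q) ^ 2 + (c3 p - c3 q) ^ 2).

(* Distance to E: infimum of distances to points of E
   (E contains 0, so this infimum is a finite nonnegative real). *)
Definition dist_E (a1 a2 a3 a b c : R) (p : vec3) : R :=
  real (Glb_Rbar (fun r => exists q, Eset a1 a2 a3 a b c q /\ r = euclid_dist p q)).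

Definition is_solution (a1 a2 a3 a b c eps : R) (x : R -> vec3) : Prop :=
  forall t : R,
    is_derive (fun s => c1 (x s)) t (c1 (revised_field a1 a2 a3 a b c eps (x t))) /\
    is_derive (fun s => c2 (x s)) t (c2 (revised_field a1 a2 a3 a b c eps (x t))) /\
    is_derive (fun s => c3 (x s)) t (c3 (revised_field a1 a2 a3 a b c eps (x t))).

(* Main.v *)
Require Import Defs.
From Stdlib Require Import Reals Lra Psatz Classical ClassicalEpsilon.
From Coquelicot Require Import Coquelicot.
Import Defs.
Open Scope R_scope.

Lemma mvt (f df : R -> R) : (forall t, is_derive f t (df t)) ->
  forall u w, u <= w -> exists z, u <= z <= w /\ f w - f u = df z * (w - u).
Proof.
  intros Hd u w Huw.
  destruct (MVT_gen f u w df) as [z [Hz Heq]].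
  - intros; apply Hd.
  - intros; apply continuity_pt_filterlim. apply (ex_derive_continuous (V:=R_NormedModule) f).
    eexists; apply Hd.
  - exists z; split; [|exact Heq].
    rewrite Rmin_left in Hz by lra; rewrite Rmax_right in Hz by lra; exact Hz.
Qed.

Lemma barbalat_pos (N g dg : R -> R) (k B L : R) : 0 < k ->
  (forall t, is_derive N t (k * g t)) -> (forall t, Rabs (N t) <= B) ->
  (forall t, 0 <= g t) -> (forall t, is_derive g t (dg t)) ->
  (forall t, Rabs (dg t) <= L) ->
  forall d, 0 < d -> exists T, forall t, T < t -> g t < d.
Proof.
  intros Hk HN HB Hg Hdg HL d Hd.
  apply NNPP; intro Hc.
  assert (Hc' : forall T, exists t, T < t /\ d <= g t).
  { intro T; apply NNPP; intro H1; apply Hc; exists T; intros t Ht.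
    destruct (Rlt_le_dec (g t) d); auto. exfalso; apply H1; exists t; auto. }
  clear Hc.
  assert (HL0 : 0 <= L) by (specialize (HL 0); pose proof (Rabs_pos (dg 0)); lra).
  set (h := d / (2 * (L + 1))).
  assert (Hh : 0 < h) by (unfold h; apply Rdiv_lt_0_compat; lra).
  assert (HLh : L * h <= d / 2).
  { apply Rle_trans with ((L+1)*h); [nra|]. right; unfold h; field; lra. }
  assert (Mon : forall u w, u <= w -> N u <= N w).
  { intros u w Huw. destruct (mvt N (fun t => k * g t) HN u w Huw) as [z [_ Hz]].
    pose proof (Hg z).
    assert (0 <= k * g z * (w-u)) by (apply Rmult_le_pos; [apply Rmult_le_pos|]; lra). lra. }
  destruct (completeness (fun y => exists t, y = N t)) as [s [Hs1 Hs2]].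
  { exists B; intros y [t ->]. specialize (HB t). apply Rabs_le_between in HB; lra. }
  { exists (N 0), 0; reflexivity. }
  set (e' := k * d * h / 2).
  assert (He' : 0 < e'). { unfold e'. assert (0 < k*d*h) by (apply Rmult_lt_0_compat; [apply Rmult_lt_0_compat|]; lra). lra. }
  assert (HT0 : exists T0, s - e' < N T0).
  { apply NNPP; intro H1.
    assert (s <= s - e'); [|lra].
    apply Hs2. intros y [t ->]. destruct (Rlt_le_dec (s - e') (N t)); auto.
    exfalso; apply H1; exists t; auto. }
  destruct HT0 as [T0 HT0].
  destruct (Hc' T0) as [t [Ht Hgt]].
  assert (Hgz : forall z, t <= z <= t + h -> d / 2 <= g z).
  { intros z Hz. destruct (mvt g dg Hdg t z (proj1 Hz)) as [z' [_ Hz']].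
    specialize (HL z'). apply Rabs_le_between in HL. nra. }
  destruct (mvt N (fun t => k * g t) HN t (t + h)) as [z [Hz1 Hz2]]; [lra|].
  pose proof (Hgz z Hz1).
  pose proof (Mon T0 t (Rlt_le _ _ Ht)).
  assert (N (t + h) <= s) by (apply Hs1; exists (t+h); auto).
  assert (k * g z * (t + h - t) >= k * (d/2) * h).
  { replace (t + h - t) with h by ring. apply Rle_ge. apply Rmult_le_compat_r; [lra|].
    apply Rmult_le_compat_l; lra. }
  unfold e' in HT0. lra.
Qed.

Lemma barbalat_fwd (N g dg : R -> R) (k B L : R) : k <> 0 ->
  (forall t, is_derive N t (k * g t)) -> (forall t, Rabs (N t) <= B) ->
  (forall t, 0 <= g t) -> (forall t, is_derive g t (dg t)) ->
  (forall t, Rabs (dg t) <= L) ->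
  forall d, 0 < d -> exists T, forall t, T < t -> g t < d.
Proof.
  intros Hk HN HB Hg Hdg HL.
  destruct (Rlt_le_dec 0 k) as [Hp|Hn].
  - eapply barbalat_pos; eauto.
  - apply (barbalat_pos (fun t => - N t) g dg (-k) B L); auto; [lra| |].
    + intro t. replace (- k * g t) with (opp (k * g t)).
      * apply (is_derive_opp (fun t => N t)); auto.
      * unfold opp; simpl; ring.
    + intro t; rewrite Rabs_Ropp; auto.
Qed.

Lemma derive_rev (f : R -> R) s d : is_derive f (- s) d -> is_derive (fun u => f (- u)) s (- d).
Proof.
  intro H. pose proof (is_derive_comp f (fun u => - u) s d (-1) H) as H2.
  assert (H3 : is_derive (fun u : R => - u) s (-1)).
  { auto_derive; auto; ring. }
  specialize (H2 H3). unfold scal in H2; simpl in H2; unfold mult in H2; simpl in H2.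
  replace (- d) with (-1 * d) by ring. exact H2.
Qed.

Lemma barbalat_bwd (N g dg : R -> R) (k B L : R) : k <> 0 ->
  (forall t, is_derive N t (k * g t)) -> (forall t, Rabs (N t) <= B) ->
  (forall t, 0 <= g t) -> (forall t, is_derive g t (dg t)) ->
  (forall t, Rabs (dg t) <= L) ->
  forall d, 0 < d -> exists T, forall t, t < T -> g t < d.
Proof.
  intros Hk HN HB Hg Hdg HL d Hd.
  destruct (barbalat_fwd (fun s => N (- s)) (fun s => g (- s)) (fun s => - dg (- s)) (-k) B L)
    with (d := d) as [T HT]; auto.
  - lra.
  - intro t. replace (- k * g (- t)) with (- (k * g (- t))) by ring. apply derive_rev; auto.
  - intro t. apply derive_rev; auto.
  - intro t. rewrite Rabs_Ropp; auto.
  - exists (- T). intros t Ht. replace t with (- - t) by ring. apply HT. lra.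
Qed.
Lemma lowq (al a1 v z : R) : 0 < a1 -> a1 <= al -> - (v * v / a1) <= al / 2 * z * z + v * z.
Proof.
  intros H1 H2.
  assert (E : al / 2 * z * z + v * z = (al * z + v) * (al * z + v) / (2 * al) - v * v / (2 * al)) by (field; lra).
  rewrite E.
  assert (0 <= (al * z + v) * (al * z + v) / (2 * al)).
  { apply Rmult_le_pos; [apply Rle_0_sqr|]. apply Rlt_le, Rinv_0_lt_compat; lra. }
  assert (v * v / (2 * al) <= v * v / a1).
  { apply Rmult_le_compat_l; [nra|]. apply Rinv_le_contravar; lra. }
  lra.
Qed.

Lemma quad_bound (z p q : R) : 0 <= p -> 0 <= q -> z * z <= p * Rabs z + q -> Rabs z <= p + q + 1.
Proof.
  intros Hp Hq H. destruct (Rle_dec (Rabs z) (p + q + 1)) as [|Hn]; auto.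
  exfalso. apply Rnot_le_lt in Hn.
  assert (E : z * z = Rabs z * Rabs z) by (rewrite <- Rabs_mult; symmetry; apply Rabs_pos_eq; nra).
  rewrite E in H. nra.
Qed.

Lemma coord_bound (al a1 v z K V : R) : 0 < a1 -> a1 <= al -> 0 <= K -> Rabs v <= V ->
  al / 2 * z * z + v * z <= K -> Rabs z <= 2 * V / a1 + 2 * K / a1 + 1.
Proof.
  intros H1 H2 HK HV H. apply quad_bound.
  - apply Rmult_le_pos; [pose proof (Rabs_pos v); lra|apply Rlt_le, Rinv_0_lt_compat; lra].
  - apply Rmult_le_pos; [lra|apply Rlt_le, Rinv_0_lt_compat; lra].
  - assert (Hvz : - (v * z) <= V * Rabs z).
    { eapply Rle_trans; [apply Rle_abs|].
      rewrite Rabs_Ropp, Rabs_mult. apply Rmult_le_compat_r; [apply Rabs_pos|auto]. }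
    assert (Hz : al / 2 * (z * z) <= K + V * Rabs z) by lra.
    assert (Hz2 : a1 * (z * z) <= 2 * (K + V * Rabs z)).
    { assert (0 <= z * z) by apply Rle_0_sqr.
      assert (a1 * (z*z) <= al * (z*z)) by (apply Rmult_le_compat_r; lra). lra. }
    apply Rmult_le_reg_l with a1; [lra|].
    replace (a1 * (2 * V / a1 * Rabs z + 2 * K / a1)) with (2 * (K + V * Rabs z)) by (field; lra).
    lra.
Qed.

Lemma dist_E_props a1 a2 a3 a b c (y q : vec3) : Eset a1 a2 a3 a b c q ->
  0 <= dist_E a1 a2 a3 a b c y <= euclid_dist y q.
Proof.
  intro Hq. unfold dist_E.
  set (S := fun r => exists q, Eset a1 a2 a3 a b c q /\ r = euclid_dist y q).
  destruct (Glb_Rbar_correct S) as [Hlb Hgr].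
  assert (H1 : Rbar_le (Glb_Rbar S) (euclid_dist y q)) by (apply Hlb; exists q; auto).
  assert (H2 : Rbar_le 0 (Glb_Rbar S)).
  { apply Hgr. intros r [q' [_ ->]]. unfold euclid_dist. simpl. apply sqrt_pos. }
  destruct (Glb_Rbar S) as [r| |]; simpl in *; try contradiction; auto.
Qed.

Lemma Eset0 a1 a2 a3 a b c : Eset a1 a2 a3 a b c (0,0,0).
Proof. unfold Eset, cross, mvec, c1, c2, c3; simpl. rewrite !Rmult_0_l, Rminus_0_r. reflexivity. Qed.

Lemma sub1 (u : nat -> R) M : (forall n, Rabs (u n) <= M) ->
  exists phi : nat -> nat, (forall k, (k <= phi k)%nat) /\ exists l, Un_cv (fun k => u (phi k)) l.
Proof.
  intro Hu.
  destruct (Bolzano_Weierstrass u (fun c => -M <= c <= M) (compact_P3 _ _)) as [l Hl].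
  { intro n; apply Rabs_le_between; auto. }
  assert (Hk : forall k : nat, exists p, (k <= p)%nat /\ Rabs (u p - l) < / (INR k + 1)).
  { intro k. assert (Hpos : 0 < / (INR k + 1)) by (apply Rinv_0_lt_compat; pose proof (pos_INR k); lra).
    destruct (Hl (fun y => Rabs (y - l) < / (INR k + 1)) k) as [p Hp].
    - exists (mkposreal _ Hpos). intros y Hy. exact Hy.
    - exists p; auto. }
  exists (fun k => proj1_sig (constructive_indefinite_description _ (Hk k))).
  split.
  - intro k. exact (proj1 (proj2_sig (constructive_indefinite_description _ (Hk k)))).
  - exists l. intros eps Heps. destruct (archimed_cor1 eps Heps) as [N [HN HN0]].
    exists N. intros n Hn. unfold R_dist.
    pose proof (proj2 (proj2_sig (constructive_indefinite_description _ (Hk n)))) as Hp.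
    eapply Rlt_trans; [exact Hp|]. eapply Rle_lt_trans; [|exact HN].
    apply Rinv_le_contravar. apply lt_0_INR; auto.
    apply le_INR in Hn. lra.
Qed.

Lemma cv_sub (v : nat -> R) l (psi : nat -> nat) : Un_cv v l -> (forall k, (k <= psi k)%nat) ->
  Un_cv (fun k => v (psi k)) l.
Proof.
  intros Hv Hp eps He. destruct (Hv eps He) as [N HN]. exists N. intros n Hn.
  apply HN. specialize (Hp n). lia.
Qed.

Lemma sub3 (y : nat -> vec3) M : (forall n, Rabs (c1 (y n)) <= M /\ Rabs (c2 (y n)) <= M /\ Rabs (c3 (y n)) <= M) ->
  exists psi : nat -> nat, (forall k, (k <= psi k)%nat) /\ exists p1 p2 p3,
   Un_cv (fun k => c1 (y (psi k))) p1 /\ Un_cv (fun k => c2 (y (psi k))) p2 /\ Un_cv (fun k => c3 (y (psi k))) p3.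
Proof.
  intro Hb.
  destruct (sub1 (fun n => c1 (y n)) M) as [f1 [Hf1 [p1 Hp1]]]; [intro n; apply Hb|].
  destruct (sub1 (fun n => c2 (y (f1 n))) M) as [f2 [Hf2 [p2 Hp2]]]; [intro n; apply Hb|].
  destruct (sub1 (fun n => c3 (y (f1 (f2 n)))) M) as [f3 [Hf3 [p3 Hp3]]]; [intro n; apply Hb|].
  exists (fun k => f1 (f2 (f3 k))). split.
  - intro k. specialize (Hf3 k). specialize (Hf2 (f3 k)). specialize (Hf1 (f2 (f3 k))). lia.
  - exists p1, p2, p3. split; [|split].
    + apply (cv_sub (fun k => c1 (y (f1 k))) p1 (fun k => f2 (f3 k))); auto.
      intro k. specialize (Hf3 k). specialize (Hf2 (f3 k)). lia.
    + apply (cv_sub (fun k => c2 (y (f1 (f2 k)))) p2 f3); auto.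
    + exact Hp3.
Qed.

Definition fF a1 a2 a3 a b c (y : vec3) : R :=
  c1 (cross y (mvec a1 a2 a3 a b c y)) * c1 (cross y (mvec a1 a2 a3 a b c y)) +
  c2 (cross y (mvec a1 a2 a3 a b c y)) * c2 (cross y (mvec a1 a2 a3 a b c y)) +
  c3 (cross y (mvec a1 a2 a3 a b c y)) * c3 (cross y (mvec a1 a2 a3 a b c y)).

Lemma cv_const (k : R) : Un_cv (fun _ : nat => k) k.
Proof. intros e He; exists 0%nat; intros; unfold R_dist; rewrite Rminus_eq_0, Rabs_R0; auto. Qed.

Ltac cvt := first [ apply CV_plus; cvt | apply CV_minus; cvt | apply CV_mult; cvt | assumption | apply cv_const ].

Lemma fF_zero a1 a2 a3 a b c q : fF a1 a2 a3 a b c q <= 0 -> Eset a1 a2 a3 a b c q.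
Proof.
  unfold fF, Eset. destruct (cross q (mvec a1 a2 a3 a b c q)) as [[w1 w2] w3].
  unfold c1, c2, c3; simpl. intro H.
  assert (w1 = 0) by nra. assert (w2 = 0) by nra. assert (w3 = 0) by nra. subst; auto.
Qed.

Lemma compact_lemma a1 a2 a3 a b c M delta : 0 < delta ->
  exists eta, 0 < eta /\ forall y, Rabs (c1 y) <= M -> Rabs (c2 y) <= M -> Rabs (c3 y) <= M ->
    fF a1 a2 a3 a b c y < eta -> dist_E a1 a2 a3 a b c y < delta.
Proof.
  intro Hd. apply NNPP; intro Hc.
  assert (Hn : forall n : nat, exists y, (Rabs (c1 y) <= M /\ Rabs (c2 y) <= M /\ Rabs (c3 y) <= M)
     /\ fF a1 a2 a3 a b c y < / (INR n + 1) /\ delta <= dist_E a1 a2 a3 a b c y).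
  { intro n. apply NNPP; intro Hn. apply Hc. exists (/ (INR n + 1)). split.
    - apply Rinv_0_lt_compat; pose proof (pos_INR n); lra.
    - intros y H1 H2 H3 H4. destruct (Rlt_le_dec (dist_E a1 a2 a3 a b c y) delta); auto.
      exfalso; apply Hn; exists y; auto. }
  set (ys := fun n => proj1_sig (constructive_indefinite_description _ (Hn n))).
  assert (Hys : forall n, (Rabs (c1 (ys n)) <= M /\ Rabs (c2 (ys n)) <= M /\ Rabs (c3 (ys n)) <= M)
     /\ fF a1 a2 a3 a b c (ys n) < / (INR n + 1) /\ delta <= dist_E a1 a2 a3 a b c (ys n)).
  { intro n. exact (proj2_sig (constructive_indefinite_description _ (Hn n))). }
  clearbody ys.
  destruct (sub3 ys M) as [psi [Hpsi [p1 [p2 [p3 [Hc1 [Hc2 Hc3]]]]]]]; [intro n; apply Hys|].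
  set (p := (p1, p2, p3) : vec3).
  assert (Hf : Un_cv (fun k => fF a1 a2 a3 a b c (ys (psi k))) (fF a1 a2 a3 a b c p)).
  { unfold fF, cross, mvec, p. simpl c1; simpl c2; simpl c3. cvt. }
  assert (Hfp : fF a1 a2 a3 a b c p <= 0).
  { apply Rnot_lt_le; intro Hlt.
    destruct (Hf (fF a1 a2 a3 a b c p / 2)) as [N1 HN1]; [lra|].
    destruct (archimed_cor1 (fF a1 a2 a3 a b c p / 2)) as [N2 [HN2 HN2']]; [lra|].
    specialize (HN1 (max N1 N2) (Nat.le_max_l _ _)). unfold R_dist in HN1.
    destruct (Hys (psi (max N1 N2))) as [_ [Hlt2 _]].
    assert (/ (INR (psi (max N1 N2)) + 1) <= / INR N2).
    { apply Rinv_le_contravar. apply lt_0_INR; auto.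
      pose proof (Hpsi (max N1 N2)). pose proof (Nat.le_max_r N1 N2).
      assert (N2 <= psi (max N1 N2))%nat by lia. apply le_INR in H1. lra. }
    apply Rabs_def2 in HN1. lra. }
  apply fF_zero in Hfp.
  assert (Hd2 : 0 < delta / 2) by lra.
  destruct (Hc1 _ Hd2) as [N1 HN1]. destruct (Hc2 _ Hd2) as [N2 HN2]. destruct (Hc3 _ Hd2) as [N3 HN3].
  set (n := max N1 (max N2 N3)).
  specialize (HN1 n ltac:(unfold n; lia)). specialize (HN2 n ltac:(unfold n; lia)).
  specialize (HN3 n ltac:(unfold n; lia)). unfold R_dist in *.
  destruct (Hys (psi n)) as [_ [_ Hge]].
  pose proof (dist_E_props a1 a2 a3 a b c (ys (psi n)) p Hfp) as [_ Hle].
  assert (euclid_dist (ys (psi n)) p < delta); [|lra].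
  unfold euclid_dist, p; simpl c1; simpl c2; simpl c3.
  rewrite <- (sqrt_Rsqr delta) by lra. apply sqrt_lt_1; [repeat apply Rplus_le_le_0_compat; apply pow2_ge_0|apply Rle_0_sqr|].
  unfold Rsqr.
  apply Rabs_def2 in HN1. apply Rabs_def2 in HN2. apply Rabs_def2 in HN3.
  assert (Hsq : forall u, - (delta/2) < u < delta/2 -> u ^ 2 <= delta * delta / 4).
  { intros u Hu. assert (Rabs u <= delta / 2) by (apply Rabs_le_between; lra).
    rewrite <- (pow2_abs u). replace (delta * delta / 4) with ((delta/2)^2) by field.
    apply pow_incr; split; [apply Rabs_pos|auto]. }
  assert (Hdd: 0 < delta * delta) by nra.
  pose proof (Hsq _ (conj (proj2 HN1) (proj1 HN1))). pose proof (Hsq _ (conj (proj2 HN2) (proj1 HN2))). pose proof (Hsq _ (conj (proj2 HN3) (proj1 HN3))). unfold c1, c2, c3 in *; simpl in *. lra.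
Qed.

Definition fR a1 a2 a3 a b c (y1 y2 y3 : R) : R :=
  (y2 * (a3 * y3 + c) - y3 * (a2 * y2 + b)) * (y2 * (a3 * y3 + c) - y3 * (a2 * y2 + b)) +
  (y3 * (a1 * y1 + a) - y1 * (a3 * y3 + c)) * (y3 * (a1 * y1 + a) - y1 * (a3 * y3 + c)) +
  (y1 * (a2 * y2 + b) - y2 * (a1 * y1 + a)) * (y1 * (a2 * y2 + b) - y2 * (a1 * y1 + a)).

Lemma fF_fR a1 a2 a3 a b c y : fF a1 a2 a3 a b c y = fR a1 a2 a3 a b c (c1 y) (c2 y) (c3 y).
Proof. reflexivity. Qed.

Lemma fF_ge0 a1 a2 a3 a b c y : 0 <= fF a1 a2 a3 a b c y.
Proof. unfold fF. repeat apply Rplus_le_le_0_compat; apply Rle_0_sqr. Qed.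

Lemma bA u v A B : Rabs u <= A -> Rabs v <= B -> Rabs (u + v) <= A + B.
Proof. intros; eapply Rle_trans; [apply Rabs_triang|]; lra. Qed.
Lemma bS u v A B : Rabs u <= A -> Rabs v <= B -> Rabs (u - v) <= A + B.
Proof. intros; eapply Rle_trans; [apply Rabs_triang|]; rewrite Rabs_Ropp; lra. Qed.
Lemma bM u v A B : Rabs u <= A -> Rabs v <= B -> Rabs (u * v) <= A * B.
Proof. intros; rewrite Rabs_mult; apply Rmult_le_compat; auto; apply Rabs_pos. Qed.
Lemma bN u A : Rabs u <= A -> Rabs (- u) <= A.
Proof. intros; rewrite Rabs_Ropp; auto. Qed.

Ltac bnd := first [ eassumption | apply Rle_refl | apply bM; bnd | apply bS; bnd | apply bA; bnd | apply bN; bnd ].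

Ltac fixD X1 X2 X3 t H1 H2 H3 :=
  rewrite (is_derive_unique (fun y : R => X1 y) t _ H1), (is_derive_unique (fun y : R => X2 y) t _ H2), (is_derive_unique (fun y : R => X3 y) t _ H3).

Theorem theorem5p3 (a1 a2 a3 a b c eps : R)
  (h1 : 0 < a1) (h12 : a1 < a2) (h23 : a2 < a3) (heps : eps <> 0)
  (x : R -> vec3) (hx : is_solution a1 a2 a3 a b c eps x) :
  is_lim (fun t => dist_E a1 a2 a3 a b c (x t)) p_infty 0 /\
  is_lim (fun t => dist_E a1 a2 a3 a b c (x t)) m_infty 0.
Proof.
  set (X1 := fun s => c1 (x s)). set (X2 := fun s => c2 (x s)). set (X3 := fun s => c3 (x s)).
  assert (hx' : forall t, is_derive X1 t (c1 (revised_field a1 a2 a3 a b c eps (x t))) /\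
     is_derive X2 t (c2 (revised_field a1 a2 a3 a b c eps (x t))) /\
     is_derive X3 t (c3 (revised_field a1 a2 a3 a b c eps (x t)))) by exact hx.
  clear hx.
  set (HH := fun s => (a1/2 * X1 s * X1 s + a * X1 s) + (a2/2 * X2 s * X2 s + b * X2 s) + (a3/2 * X3 s * X3 s + c * X3 s)).
  assert (HHd : forall t, is_derive HH t ((fun _ => 0) t)).
  { intro t. destruct (hx' t) as [H1 [H2 H3]]. unfold HH. auto_derive.
    - repeat split; eexists; eauto.
    - fixD X1 X2 X3 t H1 H2 H3. unfold X1, X2, X3.
      unfold revised_field, vadd, vscale, cross, mvec, c1, c2, c3; simpl. field. }
  assert (HHc : forall t, HH t = HH 0).
  { intro t. destruct (Rle_dec 0 t).
    - destruct (mvt HH _ HHd 0 t r) as [z [_ Hz]]. lra.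
    - destruct (mvt HH _ HHd t 0) as [z [_ Hz]]; [lra|]. lra. }
  set (K := Rabs (HH 0) + (a*a + b*b + c*c)/a1).
  set (V := Rabs a + Rabs b + Rabs c).
  set (M := 2 * V / a1 + 2 * K / a1 + 1).
  assert (HK : 0 <= K).
  { unfold K. assert (0 <= (a*a+b*b+c*c)/a1).
    { apply Rmult_le_pos; [nra|apply Rlt_le, Rinv_0_lt_compat; lra]. }
    pose proof (Rabs_pos (HH 0)); lra. }
  assert (Hsq : forall v, 0 <= v * v / a1) by (intro v; apply Rmult_le_pos; [apply Rle_0_sqr|apply Rlt_le, Rinv_0_lt_compat; lra]).
  assert (HK' : (a*a+b*b+c*c)/a1 = a*a/a1 + b*b/a1 + c*c/a1) by (field; lra).
  assert (Hbox : forall t, Rabs (X1 t) <= M /\ Rabs (X2 t) <= M /\ Rabs (X3 t) <= M).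
  { intro t. pose proof (HHc t) as E. unfold HH in E at 1.
    pose proof (Rle_abs (HH 0)).
    pose proof (lowq a1 a1 a (X1 t) h1 (Rle_refl _)).
    pose proof (lowq a2 a1 b (X2 t) h1 (Rlt_le _ _ h12)).
    pose proof (lowq a3 a1 c (X3 t) h1 (Rlt_le _ _ (Rlt_trans _ _ _ h12 h23))).
    pose proof (Hsq a); pose proof (Hsq b); pose proof (Hsq c).
    pose proof (Rabs_pos a); pose proof (Rabs_pos b); pose proof (Rabs_pos c).
    unfold M; split; [|split].
    - apply (coord_bound a1 a1 a); auto; [lra|unfold V; lra|unfold K; lra].
    - apply (coord_bound a2 a1 b); auto; [lra|unfold V; lra|unfold K; lra].
    - apply (coord_bound a3 a1 c); auto; [lra|unfold V; lra|unfold K; lra]. }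
  set (N := fun s => X1 s * X1 s + X2 s * X2 s + X3 s * X3 s).
  set (g := fun s => fF a1 a2 a3 a b c (x s)).
  assert (HNd : forall t, is_derive N t ((-2 * eps) * g t)).
  { intro t. destruct (hx' t) as [H1 [H2 H3]]. unfold N. auto_derive.
    - repeat split; eexists; eauto.
    - fixD X1 X2 X3 t H1 H2 H3. unfold X1, X2, X3, g, fF.
      unfold revised_field, vadd, vscale, cross, mvec, c1, c2, c3; simpl. field. }
  assert (HNB : exists B, forall t, Rabs (N t) <= B).
  { eexists. intro t. destruct (Hbox t) as [B1 [B2 B3]]. unfold N; cbv beta. bnd. }
  destruct HNB as [B HNB].
  assert (Hgd : forall t, is_derive g t (Derive g t)).
  { intro t. destruct (hx' t) as [H1 [H2 H3]]. apply Derive_correct.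
    apply (ex_derive_ext (fun s => fR a1 a2 a3 a b c (X1 s) (X2 s) (X3 s))); [intro; reflexivity|].
    unfold fR. auto_derive. repeat split; eexists; eauto. }
  assert (HgL : exists L, forall t, Rabs (Derive g t) <= L).
  { eexists. intro t. destruct (hx' t) as [H1 [H2 H3]].
    eassert (Hd : is_derive g t _).
    { apply (is_derive_ext (fun s => fR a1 a2 a3 a b c (X1 s) (X2 s) (X3 s))); [intro; reflexivity|].
      unfold fR. auto_derive.
      - repeat split; eexists; eauto.
      - fixD X1 X2 X3 t H1 H2 H3. reflexivity. }
    rewrite (is_derive_unique _ _ _ Hd).
    destruct (Hbox t) as [B1 [B2 B3]]. unfold X1, X2, X3 in *.
    unfold revised_field, vadd, vscale, cross, mvec.
    change (c1 (?u, ?v, ?w)) with u. change (c2 (?u, ?v, ?w)) with v. change (c3 (?u, ?v, ?w)) with w.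
    bnd. }
  destruct HgL as [L HgL].
  assert (Hk : -2 * eps <> 0) by lra.
  split; apply is_lim_spec; intro e; simpl.
  - destruct (compact_lemma a1 a2 a3 a b c M e (cond_pos e)) as [eta [Heta Hc]].
    destruct (barbalat_fwd N g (fun t => Derive g t) (-2*eps) B L Hk HNd HNB
      (fun t => fF_ge0 a1 a2 a3 a b c (x t)) Hgd HgL eta Heta) as [T HT].
    exists T. intros t Ht.
    pose proof (dist_E_props a1 a2 a3 a b c (x t) (0,0,0) (Eset0 _ _ _ _ _ _)) as [H0 _].
    destruct (Hbox t) as [B1 [B2 B3]].
    specialize (Hc (x t) B1 B2 B3 (HT t Ht)).
    rewrite Rminus_0_r, Rabs_pos_eq; auto.
  - destruct (compact_lemma a1 a2 a3 a b c M e (cond_pos e)) as [eta [Heta Hc]].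
    destruct (barbalat_bwd N g (fun t => Derive g t) (-2*eps) B L Hk HNd HNB
      (fun t => fF_ge0 a1 a2 a3 a b c (x t)) Hgd HgL eta Heta) as [T HT].
    exists T. intros t Ht.
    pose proof (dist_E_props a1 a2 a3 a b c (x t) (0,0,0) (Eset0 _ _ _ _ _ _)) as [H0 _].
    destruct (Hbox t) as [B1 [B2 B3]].
    specialize (Hc (x t) B1 B2 B3 (HT t Ht)).
    rewrite Rminus_0_r, Rabs_pos_eq; auto.
Qed.
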